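(* Let $W\colon\mathbb{R}^n\to\mathcal{M}_d$ be a matrix weight and let $F\colon\mathbb{R}^n\to\mathcal{K}_{bcs}(\mathbb{R}^d)$ be measurable such that $W^{-1}F$ is locally integrably bounded. Then, for every $x$, $$|W(x)M_\mathcal{K}^s(W^{-1}F)(x)|\sim_d\sup_{f\in S^0(F)}M_W^sf(x),$$ i.e. each side is bounded by a constant depending only on $d$ times the other. In particular, if $F(x)=\operatorname{conv}(\{-f(x),f(x)\})$ for some $f\colon\mathbb{R}^n\to\mathbb{R}^d$, then $|W(x)M_\mathcal{K}^s(W^{-1}F)(x)|\sim_d M_W^sf(x)$. These estimates also hold with the one-parameter operators $M_\mathcal{K}$ and $M_W$ in place of $M_\mathcal{K}^s$ and $M_W^s$, respectively.
   Context: $\mathbb{R}^n=\mathbb{R}^{n_1}\times\mathbb{R}^{n_2}$; $\mathcal{R}$ is the set of rectangles $Q_1\times Q_2$ with $Q_i\subset\mathbb{R}^{n_i}$ axis-parallel cubes. A matrix weight is a measurable $W\colon\mathbb{R}^n\to\mathcal{M}_d$ (real $d\times d$ matrices) with $W(x)$ symmetric positive definite a.e. $\mathcal{K}_{bcs}(\mathbb{R}^d)$: compact convex symmetric subsets of $\mathbb{R}^d$; $|A|:=\sup_{a\in A}|a|$ for $A\subset\mathbb{R}^d$, and $|W(x)A|=\sup_{b\in A}|W(x)b|$. A set-valued $F$ is measurable iff $F(x)=\overline{\{f_k(x):k\in\mathbb{N}\}}$ for some measurable vector functions $f_k$; it is locally integrably bounded if $|F(x)|\le k(x)$ for all $x$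 with $k\in L^1_{loc}$. $S^0(F)$ is the set of measurable $f$ with $f(x)\in F(x)$ for all $x$. $M_\mathcal{K}^sG(x):=\overline{\operatorname{conv}}\big(\{(\fint_Rg)1_R(x):R\in\mathcal{R},g\in S^0(G)\}\big)$ and $M_W^sf(x):=\sup_{R\in\mathcal{R},R\ni x}\fint_R|W(x)W(y)^{-1}f(y)|dy$. The one-parameter versions $M_\mathcal{K}$ and $M_W$ are defined identically with $R\in\mathcal{R}$ replaced by arbitrary axis-parallel cubes $Q\subset\mathbb{R}^n$. *)

(* Defs.v *)
From HB Require Import structures.
From mathcomp Require Import all_boot all_order all_algebra.
From mathcomp Require Import all_classical all_reals all_analysis.
Set Implicit Arguments. Unset Strict Implicit. Unset Printing Implicit Defensive.
Import Order.TTheory GRing.Theory Num.Theory.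
Import numFieldNormedType.Exports.
Local Open Scope classical_set_scope.
Local Open Scope ring_scope.

Section Defs.
Variable R : realType.

Definition eucl (d : nat) (v : 'cV[R]_d) : R := Num.sqrt (\sum_(i < d) v i 0 ^+ 2).

Definition box (n : nat) (a b : 'rV[R]_n) : set 'rV[R]_n :=
  [set x | forall i, a 0 i <= x 0 i <= b 0 i].
Definition box_vol (n : nat) (a b : 'rV[R]_n) : R := \prod_(i < n) (b 0 i - a 0 i).

Definition leb_outer (n : nat) (A : set 'rV[R]_n) : \bar R :=
  ereal_inf [set s | exists a b : nat -> 'rV[R]_n,
     (forall k i, a k 0 i <= b k 0 i) /\
     A `<=` \bigcup_k box (a k) (b k) /\
     s = (\sum_(0 <= k <oo) (box_vol (a k) (b k))%:E)%E].

Definition leb_sets (n : nat) : set (set 'rV[R]_n) := caratheodory_measurable (@leb_outer n).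

(** R^n equipped with the Lebesgue sigma-algebra (generated by [leb_sets n],
    which is already a sigma-algebra). *)
End Defs.

Notation LebT R n := (g_sigma_algebraType (@leb_sets R n)).

Section Defs2.
Variable R : realType.
Local Notation LebT n := (LebT R n).

Definition pt (n : nat) (x : LebT n) : 'rV[R]_n := x.

Definition is_lebesgue (n : nat) (mu : set (LebT n) -> \bar R) : Prop :=
  forall A : set (LebT n), measurable A -> mu A = leb_outer A.

Definition cube (k : nat) (a : 'rV[R]_k) (l : R) : set 'rV[R]_k :=
  [set y | forall i, a 0 i <= y 0 i <= a 0 i + l].

Definition cubes (n : nat) : set (set (LebT n)) :=
  [set Q | exists (a : 'rV[R]_n) (l : R), 0 < l /\ Q = (fun x => cube a l (pt x))].

Definition rects (n1 n2 : nat) : set (set (LebT (n1 + n2))) :=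
  [set Q | exists (a1 : 'rV[R]_n1) (l1 : R) (a2 : 'rV[R]_n2) (l2 : R),
     0 < l1 /\ 0 < l2 /\
     Q = (fun x => cube a1 l1 (lsubmx (pt x)) /\ cube a2 l2 (rsubmx (pt x)))].

Variables (n d : nat).

Definition vmeas (f : LebT n -> 'cV[R]_d) : Prop :=
  forall i, measurable_fun setT (fun x => f x i 0).

Definition convhull (S : set 'cV[R]_d) : set 'cV[R]_d :=
  [set b | exists (k : nat) (c : 'I_k -> R) (v : 'I_k -> 'cV[R]_d),
     (forall j, 0 <= c j) /\ \sum_(j < k) c j = 1 /\ (forall j, S (v j)) /\
     b = \sum_(j < k) c j *: v j].

Definition convex_set (K : set 'cV[R]_d) : Prop :=
  forall a b t, K a -> K b -> 0 <= t <= 1 -> K (t *: a + (1 - t) *: b).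

Definition symmetric_set (K : set 'cV[R]_d) : Prop := forall a, K a -> K (- a).

Definition Kbcs (K : set 'cV[R]_d) : Prop :=
  compact K /\ convex_set K /\ symmetric_set K.

(** |A| := sup_{a in A} |a| and |M A| := sup_{b in A} |M b| (values in [0, +oo] or -oo for empty A). *)
Definition set_norm (M : 'M[R]_d) (A : set 'cV[R]_d) : \bar R :=
  ereal_sup [set (eucl (M *m b))%:E | b in A].

Definition setfun_meas (F : LebT n -> set 'cV[R]_d) : Prop :=
  exists fk : nat -> LebT n -> 'cV[R]_d,
    (forall k, vmeas (fk k)) /\
    forall x, F x = closure (range (fun k => fk k x)).

Variable mu : {measure set (LebT n) -> \bar R}.

Definition L1loc (k : LebT n -> R) : Prop :=
  measurable_fun setT k /\
  forall (a : 'rV[R]_n) (l : R), 0 < l ->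
    mu.-integrable (fun x => cube a l (pt x)) (fun x => (k x)%:E).

Definition loc_int_bounded (F : LebT n -> set 'cV[R]_d) : Prop :=
  exists k : LebT n -> R, L1loc k /\
    forall x, (set_norm 1%:M (F x) <= (k x)%:E)%E.

Definition S0 (F : LebT n -> set 'cV[R]_d) : set (LebT n -> 'cV[R]_d) :=
  [set f | vmeas f /\ forall x, F x (f x)].

Definition posdef (M : 'M[R]_d) : Prop :=
  M^T = M /\ forall v : 'cV[R]_d, v != 0 -> 0 < (v^T *m M *m v) 0 0.

Definition matrix_weight (W : LebT n -> 'M[R]_d) : Prop :=
  (forall i j, measurable_fun setT (fun x => W x i j)) /\
  exists N : set (LebT n), measurable N /\ mu N = 0%E /\
    forall x, ~ N x -> posdef (W x).

Definition winv_set (W : LebT n -> 'M[R]_d) (F : LebT n -> set 'cV[R]_d) :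
  LebT n -> set 'cV[R]_d := fun x => [set invmx (W x) *m b | b in F x].

Definition avg (A : set (LebT n)) (g : LebT n -> 'cV[R]_d) : 'cV[R]_d :=
  (fine (mu A))^-1 *: \col_(i < d) Rintegral mu A (fun y => g y i 0).

(** M_K over the family B of sets (B = rects: M_K^s ; B = cubes: M_K). *)
Definition MK (B : set (set (LebT n))) (G : LebT n -> set 'cV[R]_d) (x : LebT n)
  : set 'cV[R]_d :=
  closure (convhull [set (\1_A x) *: avg A g | A in B & g in S0 G]).

(** M_W over the family B (B = rects: M_W^s ; B = cubes: M_W). *)
Definition MW (B : set (set (LebT n))) (W : LebT n -> 'M[R]_d)
  (f : LebT n -> 'cV[R]_d) (x : LebT n) : \bar R :=
  ereal_sup [set ((fine (mu A))^-1)%:E *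
                 \int[mu]_(y in A) (eucl (W x *m invmx (W y) *m f y))%:E
            | A in [set A | B A /\ A x]]%E.

Definition supMW (B : set (set (LebT n))) (W : LebT n -> 'M[R]_d)
  (F : LebT n -> set 'cV[R]_d) (x : LebT n) : \bar R :=
  ereal_sup [set MW B W f x | f in S0 F].

End Defs2.

(* Main.v *)
Require Import Defs.
From HB Require Import structures.
From mathcomp Require Import all_boot all_order all_algebra.
From mathcomp Require Import all_classical all_reals all_analysis.
From mathcomp Require Import measurable_realfun.
From mathcomp Require Import ring lra.
Set Implicit Arguments. Unset Strict Implicit. Unset Printing Implicit Defensive.
Import Order.TTheory GRing.Theory Num.Theory.
Import numFieldNormedType.Exports.
Local Open Scope classical_set_scope.
Local Open Scope ring_scope.

Section Eucl.
Variable R : realType.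

Lemma eucl_ge0 d (v : 'cV[R]_d) : 0 <= eucl v.
Proof. exact: sqrtr_ge0. Qed.

Lemma eucl0 d : eucl (0 : 'cV[R]_d) = 0.
Proof. rewrite /eucl big1 ?sqrtr0 // => i _; by rewrite mxE expr0n. Qed.

Lemma eucl_coord d (v : 'cV[R]_d) i : `|v i 0| <= eucl v.
Proof.
rewrite /eucl -sqrtr_sqr ler_wsqrtr // (bigD1 i) //= lerDl.
by apply: sumr_ge0 => j _; exact: sqr_ge0.
Qed.

Lemma eucl_le_sum d (v : 'cV[R]_d) : eucl v <= \sum_i `|v i 0|.
Proof.
have [H1 H2] : \sum_i v i 0 ^+ 2 <= (\sum_i `|v i 0|) ^+ 2 /\ 0 <= \sum_i `|v i 0|.
  apply: (big_rec2 (fun a b => a <= b ^+ 2 /\ 0 <= b)) => [|i a b _ [h1 h2]].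
    by rewrite expr0n.
  split; last by rewrite addr_ge0.
  rewrite sqrrD real_normK ?num_real //.
  rewrite -addrA lerD2l (le_trans h1) // lerDr addr_ge0 // ?sqr_ge0 //.

  1,2: by rewrite mulr_ge0.
by rewrite /eucl -(ger0_norm H2) -sqrtr_sqr ler_wsqrtr.
Qed.

Lemma mulmx_coord_le p q (M : 'M[R]_(p, q)) (v : 'cV[R]_q) i (m : R) :
  (forall j, `|v j 0| <= m) -> `|(M *m v) i 0| <= (\sum_j `|M i j|) * m.
Proof.
move=> hv; rewrite mxE mulr_suml (le_trans (ler_norm_sum _ _ _)) //.
apply: ler_sum => j _; rewrite normrM ler_wpM2l //.
Qed.

End Eucl.

Section Meas.
Context d (T : measurableType d) (R : realType).

Definition mmeas p q (M : T -> 'M[R]_(p, q)) :=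
  forall i j, measurable_fun setT (fun y => M y i j).

Lemma mmeas_cst p q (A : 'M[R]_(p, q)) : mmeas (fun _ => A).
Proof. by move=> i j; exact: measurable_cst. Qed.

Lemma mmeas_mul p q r (M : T -> 'M[R]_(p, q)) (N : T -> 'M[R]_(q, r)) :
  mmeas M -> mmeas N -> mmeas (fun y => M y *m N y).
Proof.
move=> hM hN i j.
rewrite (_ : (fun y => (M y *m N y) i j) = (fun y => \sum_k M y i k * N y k j)); last first.
  by apply/funext => y; rewrite mxE.
by apply: measurable_sum => k; exact: measurable_funM.
Qed.

Lemma mmeas_det n (M : T -> 'M[R]_n) : mmeas M ->
  measurable_fun setT (fun y => \det (M y)).
Proof.
move=> hM; rewrite /determinant.
apply: measurable_sum => s; apply: measurable_funM; first exact: measurable_cst.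
by apply: measurable_prod => i _; exact: hM.
Qed.

Lemma measurable_inv : measurable_fun (setT : set R) (@GRing.inv R).
Proof.
have -> : (setT : set R) = [set 0] `|` [set x | x != 0].
  by apply/seteqP; split => x //= _; case: (eqVneq x 0) => h; [left|right].
apply/measurable_funU => //.
  apply: open_measurable; exact: (@open_neq R 0) .
split; first exact: measurable_fun_set1.
apply: open_continuous_measurable_fun; first exact: (@open_neq R 0).
move=> x; rewrite inE /= => x0.
exact: inv_continuous.
Qed.

Lemma mmeas_inv n (M : T -> 'M[R]_n) : mmeas M -> mmeas (fun y => invmx (M y)).
Proof.
move=> hM i j.
have hdet := mmeas_det hM.
rewrite /invmx.
rewrite (_ : (fun y => _) = (fun y => if \det (M y) != 0 then (\det (M y))^-1 * \adj (M y) i j else M y i j)); last first.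
  apply/funext => y; rewrite unitmxE unitfE; case: ifP => _ //; by rewrite mxE.
apply: measurable_fun_ifT.
- apply: measurable_neg; apply: measurable_fun_eqr => //; exact: measurable_cst.
- apply: measurable_funM; first exact: measurableT_comp measurable_inv hdet.
  rewrite /adjugate.
  rewrite (_ : (fun y => _) = (fun y => cofactor (M y) j i)); last by apply/funext => y; rewrite mxE.
  rewrite /cofactor; apply: measurable_funM; first exact: measurable_cst.
  apply: mmeas_det => a b.
  rewrite (_ : (fun y => _) = (fun y => M y (lift j a) (lift i b))); first exact: hM.
  by apply/funext => y; rewrite !mxE.
- exact: hM.
Qed.

Lemma measurable_eucl p (v : T -> 'cV[R]_p) : mmeas v ->
  measurable_fun setT (fun y => eucl (v y)).
Proof.
move=> hv; apply: measurableT_comp; first exact: continuous_measurable_fun (@sqrt_continuous R).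
by apply: measurable_sum => i; apply: measurable_funX; exact: hv.
Qed.

End Meas.

Section Carath.
Variable R : realType.
Variable n : nat.
Local Notation leb := (@leb_outer R n).

Lemma box_vol_ge0 (a b : 'rV[R]_n) : (forall i, a 0 i <= b 0 i) -> 0 <= box_vol a b.
Proof. by move=> h; apply: prodr_ge0 => i _; rewrite subr_ge0. Qed.

Lemma leb_ge0 X : (0 <= leb X)%E.
Proof.
apply/ereal_infP => _ [a [b [hab [cov ->]]]].
by apply: nneseries_ge0 => k _ _; rewrite lee_fin box_vol_ge0.
Qed.

Lemma ge0_neqNy (x : \bar R) : (0 <= x)%E -> x != -oo%E.
Proof. by case: x. Qed.

Lemma leb_cover X (a b : nat -> 'rV[R]_n) : (forall k i, a k 0 i <= b k 0 i) ->
  X `<=` \bigcup_k box (a k) (b k) ->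
  (leb X <= \sum_(0 <= k <oo) (box_vol (a k) (b k))%:E)%E.
Proof. by move=> hab cov; apply: ereal_inf_lbound; exists a, b. Qed.

Lemma leb_subadd X P Q : X `<=` P `|` Q -> (leb X <= leb P + leb Q)%E.
Proof.
move=> XPQ.
have [fP|] := boolP (leb P \is a fin_num); last first.
  rewrite ge0_fin_numE ?leb_ge0 // -leNgt leye_eq => /eqP ->.
  by rewrite addye ?leey // ge0_neqNy // leb_ge0.
have [fQ|] := boolP (leb Q \is a fin_num); last first.
  rewrite ge0_fin_numE ?leb_ge0 // -leNgt leye_eq => /eqP ->.
  by rewrite addey ?leey // ge0_neqNy // leb_ge0.
apply/lee_addgt0Pr => e e0.
have e20 : 0 < e / 2 by rewrite divr_gt0.
have [_ [a [b [hab [covP ->]]]] hs] := lb_ereal_inf_adherent e20 fP.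
have [_ [a' [b' [hab' [covQ ->]]]] ht] := lb_ereal_inf_adherent e20 fQ.
pose A k := if odd k then a' k./2 else a k./2.
pose B k := if odd k then b' k./2 else b k./2.
pose u k := (box_vol (a k) (b k))%:E.
pose u' k := (box_vol (a' k) (b' k))%:E.
have u0 k : (0 <= u k)%E by rewrite lee_fin box_vol_ge0.
have u'0 k : (0 <= u' k)%E by rewrite lee_fin box_vol_ge0.
have hAB k i : A k 0 i <= B k 0 i by rewrite /A /B; case: ifP.
have U0 k : (0 <= (box_vol (A k) (B k))%:E)%E by rewrite lee_fin box_vol_ge0.
apply: (le_trans (leb_cover hAB _)).
  move=> y /XPQ [/covP [k _ hk]|/covQ [k _ hk]].
    exists k.*2 => //; by rewrite /A /B odd_double doubleK.
  exists k.*2.+1 => //.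
  by rewrite /A /B /= odd_double /= uphalf_double.
have sum2 N : \sum_(0 <= k < N.*2) (box_vol (A k) (B k))%:E =
              \sum_(0 <= j < N) (u j + u' j).
  elim: N => [|N IH]; first by rewrite !big_geq.
  rewrite doubleS !big_nat_recr //= IH -addeA; congr (_ + _).
  by rewrite /A /B /= odd_double /= doubleK uphalf_double.
apply: (@le_trans _ _ ((leb P + (e/2)%:E) + (leb Q + (e/2)%:E))%E); last first.
  rewrite -(fineK fP) -(fineK fQ) -!EFinD lee_fin.
  lra.
apply: (le_trans _ (leeD (ltW hs) (ltW ht))).
apply: lime_le; first exact: is_cvg_nneseries.
apply: nearW => N.
apply: (@le_trans _ _ (\sum_(0 <= k < N.*2) (box_vol (A k) (B k))%:E)%E).
  have hN : (N <= N.*2)%N by rewrite -addnn leq_addl.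
  rewrite (big_cat_nat (leq0n N) hN) //=.
  by rewrite leeDl // sume_ge0.
rewrite sum2 big_split /=; apply: leeD; exact: nneseries_lim_ge.
Qed.

Lemma carath_half (i : 'I_n) (c : R) (H : set 'rV[R]_n) :
  [set y : 'rV[R]_n | y 0 i < c] `<=` H -> H `<=` [set y : 'rV[R]_n | y 0 i <= c] ->
  caratheodory_measurable leb H.
Proof.
move=> Hl Hr X; apply/eqP; rewrite eq_le; apply/andP; split.
  by apply: leb_subadd => y Xy; case: (pselect (H y)) => hy; [left|right].
apply/ereal_infP => _ [a [b [hab [cov ->]]]].
pose mid k := if c <= a k 0 i then a k 0 i else if b k 0 i <= c then b k 0 i else c.
have amid k : a k 0 i <= mid k.
  rewrite /mid; case: ifP => [_|h1]; first by [].
  case: ifP => [_|_]; first exact: hab.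
  by rewrite ltW // ltNge h1.
have midb k : mid k <= b k 0 i.
  rewrite /mid; case: ifP => [_|h1]; first exact: hab.
  case: ifP => [_|h2]; first by [].
  by rewrite ltW // ltNge h2.
pose bL k := \row_j (if j == i then mid k else b k 0 j).
pose aR k := \row_j (if j == i then mid k else a k 0 j).
have habL k j : a k 0 j <= bL k 0 j by rewrite mxE; case: eqP => [->|]//.
have habR k j : aR k 0 j <= b k 0 j by rewrite mxE; case: eqP => [->|]//.
have vsplit k : box_vol (a k) (bL k) + box_vol (aR k) (b k) = box_vol (a k) (b k).
  rewrite /box_vol.
  rewrite (bigD1 i (F := fun j => bL k 0 j - a k 0 j)) //.
  rewrite (bigD1 i (F := fun j => b k 0 j - aR k 0 j)) //.
  rewrite (bigD1 i (F := fun j => b k 0 j - a k 0 j)) //=.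
  have -> : \prod_(j | j != i) (bL k 0 j - a k 0 j) = \prod_(j | j != i) (b k 0 j - a k 0 j).
    by apply: eq_bigr => j /negbTE hj; rewrite mxE hj.
  have -> : \prod_(j | j != i) (b k 0 j - aR k 0 j) = \prod_(j | j != i) (b k 0 j - a k 0 j).
    by apply: eq_bigr => j /negbTE hj; rewrite mxE hj.
  rewrite !mxE eqxx.
  ring.
apply: (@le_trans _ _ (\sum_(0 <= k <oo) (box_vol (a k) (bL k))%:E +
                       \sum_(0 <= k <oo) (box_vol (aR k) (b k))%:E)%E).
  apply: leeD.
    apply: leb_cover => // y [/cov [k _ hk] Hy]; exists k => // j.
    have := hk j; rewrite !mxE; case: eqP => [->|_] // /andP[h1 h2].
    rewrite h1 /= /mid; have yc := Hr _ Hy; rewrite /= in yc.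
    case: ifP => [ca|_]; first exact: le_trans yc ca.
    by case: ifP.
  apply: leb_cover => // y [/cov [k _ hk] Hy]; exists k => // j.
  have := hk j; rewrite !mxE; case: eqP => [->|_] // /andP[h1 h2].
  rewrite h2 andbT /mid.
  have yc : c <= y 0 i by rewrite leNgt; apply/negP => /Hl.
  case: ifP => // _; case: ifP => // bc; exact: le_trans bc yc.
rewrite -nneseriesD; last 2 first.
- by move=> k _ _; rewrite lee_fin box_vol_ge0.
- by move=> k _ _; rewrite lee_fin box_vol_ge0.
apply: lee_nneseries => [k _ _|k _]; first by rewrite adde_ge0 // lee_fin box_vol_ge0.
by rewrite -EFinD vsplit.
Qed.

End Carath.

Section MeasSets.
Variable R : realType.
Variable n : nat.
Local Notation T := (LebT R n).

Lemma meas_le (i : 'I_n) (c : R) : measurable [set y : T | pt y 0 i <= c].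
Proof.
apply: sub_gen_smallest; apply: (@carath_half R n i c) => y /=; last by [].
exact: ltW.
Qed.

Lemma meas_lt (i : 'I_n) (c : R) : measurable [set y : T | pt y 0 i < c].
Proof.
apply: sub_gen_smallest; apply: (@carath_half R n i c) => y /=; first by [].
exact: ltW.
Qed.

Lemma meas_ge (i : 'I_n) (c : R) : measurable [set y : T | c <= pt y 0 i].
Proof.
have -> : [set y : T | c <= pt y 0 i] = ~` [set y : T | pt y 0 i < c].
  by apply/seteqP; split => y /=; rewrite leNgt => /negP.
exact: measurableC (meas_lt i c).
Qed.

Lemma meas_coordbox m (s : 'I_m -> 'I_n) (lo hi : 'I_m -> R) :
  measurable [set y : T | forall j, lo j <= pt y 0 (s j) <= hi j].
Proof.
have -> : [set y : T | forall j, lo j <= pt y 0 (s j) <= hi j] =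
   \bigcap_(j in [set: 'I_m]) ([set y : T | lo j <= pt y 0 (s j)] `&` [set y : T | pt y 0 (s j) <= hi j]).
  apply/seteqP; split => y /=.
    by move=> h j _; have /andP[] := h j.
  by move=> h j; have [h1 h2] := h j I; rewrite h1 h2.
apply: fin_bigcap_measurable; first exact: finite_finset.
move=> j _; apply: measurableI; [exact: meas_ge| exact: meas_le].
Qed.

Lemma cubes_meas (A : set T) : cubes A -> measurable A.
Proof.
move=> [a [l [_ ->]]].
exact: (meas_coordbox id (fun j => a 0 j) (fun j => a 0 j + l)).
Qed.

End MeasSets.

Lemma rects_meas (R : realType) n1 n2 (A : set (LebT R (n1 + n2))) : rects A -> measurable A.
Proof.
move=> [a1 [l1 [a2 [l2 [_ [_ ->]]]]]].
have -> : (fun x : LebT R (n1 + n2) => cube a1 l1 (lsubmx (pt x)) /\ cube a2 l2 (rsubmx (pt x))) =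
  [set y : LebT R (n1 + n2) | forall j, a1 0 j <= pt y 0 (lshift n2 j) <= a1 0 j + l1] `&`
  [set y : LebT R (n1 + n2) | forall j, a2 0 j <= pt y 0 (rshift n1 j) <= a2 0 j + l2].
  apply/seteqP; split => y /= [h1 h2]; split => j.
  - by have := h1 j; rewrite mxE.
  - by have := h2 j; rewrite mxE.
  - by rewrite mxE; exact: h1.
  - by rewrite mxE; exact: h2.
by apply: measurableI; exact: meas_coordbox.
Qed.

Lemma eucl_scale (R : realType) d (t : R) (v : 'cV[R]_d) : eucl (t *: v) = `|t| * eucl v.
Proof.
rewrite /eucl -sqrtr_sqr -sqrtrM ?sqr_ge0 // mulr_sumr; congr Num.sqrt.
by apply: eq_bigr => i _; rewrite mxE exprMn.
Qed.

Lemma convhull2 (R : realType) d (v w : 'cV[R]_d) :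
  convhull [set - v; v] w -> exists t : R, `|t| <= 1 /\ w = t *: v.
Proof.
move=> [m [c [u [c0 [c1 [hu ->]]]]]].
have [e he] : exists e : 'I_m -> R, forall j, `|e j| = 1 /\ u j = e j *: v.
  exists (fun j => if u j == v then 1 else -1) => j; case: eqP => [->|h].
    by rewrite normr1 scale1r.
  case: (hu j) => // ->; by rewrite normrN1 scaleN1r.
exists (\sum_j c j * e j); split.
  rewrite (le_trans (ler_norm_sum _ _ _)) // -c1; apply: ler_sum => j _.
  by rewrite normrM (proj1 (he j)) mulr1 ger0_norm.
rewrite scaler_suml; apply: eq_bigr => j _; by rewrite (proj2 (he j)) scalerA.
Qed.

Lemma posdef_unit (R : realType) d (M : 'M[R]_d) : posdef M -> M \in unitmx.
Proof.
move=> [hs hp]; rewrite unitmxE unitfE; apply/negP => /det0P [v v0 vM].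
have w0 : v^T != 0 by apply: contra v0 => /eqP h; rewrite -(trmxK v) h trmx0.
have := hp _ w0; rewrite trmxK vM mul0mx mxE ltxx //.
Qed.

Section Main.
Variables (R : realType) (n d : nat).
Local Notation T := (LebT R n).
Variables (mu : {measure set T -> \bar R}) (W : T -> 'M[R]_d) (F : T -> set 'cV[R]_d)
  (k : T -> R) (x : T) (B : set (set T)) (N : set T).
Hypothesis hWm : mmeas W.
Hypothesis mN : measurable N.
Hypothesis muN : mu N = 0%E.
Hypothesis hWpd : forall y, ~ N y -> posdef (W y).
Hypothesis hF0 : forall y, F y 0.
Hypothesis hFsym : forall y v, F y v -> F y (- v).
Hypothesis hk : forall y, (set_norm 1%:M (winv_set W F y) <= (k y)%:E)%E.
Hypothesis hBm : forall A, B A -> measurable A.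
Hypothesis hBint : forall A, B A -> mu.-integrable A (EFin \o k).
Hypothesis hBx : exists A, B A /\ A x.

Local Notation L y := (W x *m invmx (W y)).
Let cA (A : set T) := (fine (mu A))^-1.
Let nu (b : 'cV[R]_d) := \sum_i `|(W x *m b) i 0|.
Local Notation WF := (winv_set W F).
Local Notation sig := (set_norm (W x) (MK mu B WF x)).
Local Notation tau := (supMW mu B W F x).

Lemma cA_ge0 A : 0 <= cA A.
Proof. by rewrite invr_ge0 fine_ge0 // measure_ge0. Qed.

Lemma vmeas_mmeas (f : T -> 'cV[R]_d) : vmeas f -> mmeas f.
Proof. by move=> h i j; rewrite (ord1 j); exact: h. Qed.

Lemma mmeas_vmeas (f : T -> 'cV[R]_d) : mmeas f -> vmeas f.
Proof. by move=> h i; exact: h. Qed.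

Lemma sel_bound g : S0 WF g -> forall y, eucl (g y) <= k y.
Proof.
move=> [_ hg] y; rewrite -lee_fin (le_trans _ (hk y)) //.
apply: ereal_sup_ubound; exists (g y) => //; by rewrite mul1mx.
Qed.

Lemma S0_WF0 : S0 WF (fun _ => 0).
Proof.
split; first by move=> i; exact: measurable_cst.
by move=> y; exists 0; rewrite ?mulmx0.
Qed.

Lemma S0_F0 : S0 F (fun _ => 0).
Proof. by split; [move=> i; exact: measurable_cst | exact: hF0]. Qed.

Lemma k_ge0 y : 0 <= k y.
Proof. by rewrite (le_trans _ (sel_bound S0_WF0 y)) // eucl_ge0. Qed.

Lemma integ A (h : T -> R) (K : R) : B A -> measurable_fun setT h -> 0 <= K ->
  (forall y, `|h y| <= K * k y) -> mu.-integrable A (EFin \o h).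
Proof.
move=> BA hm K0 hb.
have hi := integrableZl (hBm BA) K (hBint BA).
apply: (le_integrable (hBm BA) _ _ hi).
  by apply/measurable_EFinP; exact: measurable_funTS.
move=> y _ /=; rewrite lee_fin (le_trans (hb y)) //; exact: ler_norm.
Qed.

Lemma meas_L (v : T -> 'cV[R]_d) : mmeas v -> mmeas (fun y => L y *m v y).
Proof.
move=> hv; apply: mmeas_mul => //; apply: mmeas_mul; first exact: mmeas_cst.
exact: mmeas_inv.
Qed.

Lemma Rint_EFin A h : B A -> mu.-integrable A (EFin \o h) ->
  ((Rintegral mu A h)%:E = \int[mu]_(y in A) (h y)%:E)%E.
Proof. by move=> BA hi; rewrite /Rintegral fineK // (integrable_fin_num (hBm BA) hi). Qed.

Lemma Rint_sum A (I : Type) (s : seq I) (h : I -> T -> R) : B A ->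
  (forall i, mu.-integrable A (EFin \o h i)) ->
  Rintegral mu A (fun y => \sum_(i <- s) h i y) = \sum_(i <- s) Rintegral mu A (h i).
Proof.
move=> BA hi; elim: s => [|i s IH].
  rewrite big_nil; transitivity (Rintegral mu A (fun _ => 0)).
    by apply: eq_Rintegral => y _; rewrite big_nil.
  by rewrite Rintegral_cst ?mul0r //; exact: hBm.
rewrite big_cons -IH -RintegralD //; first by apply: eq_Rintegral => y _; rewrite big_cons.
- exact: hBm.
- have := @integrable_sum _ _ _ mu A (hBm BA) _ s xpredT (fun i y => (h i y)%:E) (fun i _ => hi i).
  apply: eq_integrable; first exact: hBm.
  by move=> y _ /=; rewrite sumEFin.
Qed.


Let Kx := \sum_i \sum_j `|W x i j|.

Lemma Kx_ge0 : 0 <= Kx.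
Proof. by apply: sumr_ge0 => i _; apply: sumr_ge0. Qed.

Lemma coordWx (v : 'cV[R]_d) i : `|(W x *m v) i 0| <= Kx * eucl v.
Proof.
apply: (le_trans (mulmx_coord_le _ _ (fun j => eucl_coord v j))).
rewrite ler_wpM2r ?eucl_ge0 // /Kx [X in _ <= X](bigD1 i) //= lerDl.
by apply: sumr_ge0 => j _; apply: sumr_ge0.
Qed.

Lemma euclWx (v : 'cV[R]_d) : eucl (W x *m v) <= Kx * eucl v.
Proof.
apply: (le_trans (eucl_le_sum _)); rewrite /Kx mulr_suml; apply: ler_sum => i _.
exact: mulmx_coord_le (fun j => eucl_coord v j).
Qed.

Lemma avg_coord A g i : B A -> S0 WF g ->
  (W x *m avg mu A g) i 0 = cA A * Rintegral mu A (fun y => (W x *m g y) i 0).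
Proof.
move=> BA hg.
have hgi j : mu.-integrable A (EFin \o (fun y => g y j 0)).
  apply: (integ (K := 1) BA (hg.1 j) ler01) => y.
  by rewrite mul1r (le_trans (eucl_coord _ _)) // sel_bound.
rewrite /avg -scalemxAr mxE; congr (_ * _).
rewrite mxE.
transitivity (Rintegral mu A (fun y => \sum_j W x i j * g y j 0)); last first.
  by apply: eq_Rintegral => y _; rewrite mxE.
rewrite Rint_sum //; last first.
  move=> j; apply: (integ (K := `|W x i j|) BA) => //.
  - by apply: measurable_funM; [exact: measurable_cst | exact: hg.1].
  - move=> y; rewrite normrM ler_wpM2l // (le_trans (eucl_coord _ _)) //.
    exact: sel_bound.
apply: eq_bigr => j _; rewrite mxE RintegralZl //; exact: hBm.
Qed.

Lemma S_in_MK A g : B A -> S0 WF g -> MK mu B WF x ((\1_A x) *: avg mu A g).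
Proof.
move=> BA hg; rewrite /MK; apply: subset_closure.
exists 1%N, (fun _ => 1), (fun _ => (\1_A x) *: avg mu A g).
split => //; split; first by rewrite big_ord1.
split; first by move=> j; exists A => //; exists g.
by rewrite big_ord1 scale1r.
Qed.

Lemma sig_ge0 : (0 <= sig)%E.
Proof.
have [A [BA _]] := hBx.
apply: (le_trans _ (ereal_sup_ubound _)); last first.
  by exists ((\1_A x) *: avg mu A (fun _ => 0)); first exact: S_in_MK S0_WF0.
by rewrite lee_fin eucl_ge0.
Qed.

Lemma MW_ge0 f : (0 <= MW mu B W f x)%E.
Proof.
have [A [BA Ax]] := hBx.
apply: (@le_trans _ _ (((cA A)%:E * \int[mu]_(y in A) (eucl (L y *m f y))%:E))%E).
  apply: mule_ge0; first by rewrite lee_fin cA_ge0.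
  by apply: integral_ge0 => y _; rewrite lee_fin eucl_ge0.
by apply: ereal_sup_ubound; exists A.
Qed.

Lemma tau_ge0 : (0 <= tau)%E.
Proof.
apply: (le_trans (MW_ge0 (fun _ => 0))); apply: ereal_sup_ubound.
by exists (fun _ => 0) => //; exact: S0_F0.
Qed.

Lemma nu_ge0 b : 0 <= nu b.
Proof. by apply: sumr_ge0 => i _. Qed.

Lemma nu_add b b' : nu (b + b') <= nu b + nu b'.
Proof.
rewrite /nu -big_split; apply: ler_sum => i _ /=.
by rewrite mulmxDr mxE ler_normD.
Qed.

Lemma nu_sum m (c : 'I_m -> R) (v : 'I_m -> 'cV[R]_d) : (forall j, 0 <= c j) ->
  nu (\sum_j c j *: v j) <= \sum_j c j * nu (v j).
Proof.
move=> c0; rewrite /nu.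
rewrite (eq_bigr (fun i => `|\sum_j c j * (W x *m v j) i 0|)); last first.
  move=> i _; rewrite mulmx_sumr summxE; congr `|_|.
  by apply: eq_bigr => j _; rewrite -scalemxAr mxE.
apply: (@le_trans _ _ (\sum_i \sum_j c j * `|(W x *m v j) i 0|)).
  apply: ler_sum => i _; apply: (le_trans (ler_norm_sum _ _ _)).
  by apply: ler_sum => j _; rewrite normrM ger0_norm.
rewrite exchange_big /=; apply: ler_sum => j _; by rewrite mulr_sumr.
Qed.

Lemma coord_le_mxnorm (w : 'cV[R]_d) j : `|w j 0| <= `|w|.
Proof.
rewrite [X in _ <= X]mx_normrE.
exact: (le_bigmax _ (fun ij : 'I_d * 'I_1 => `|w ij.1 ij.2|) (j, 0)).
Qed.

Lemma nu_bound w : nu w <= Kx * `|w|.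
Proof.
rewrite /nu /Kx mulr_suml; apply: ler_sum => i _.
exact: mulmx_coord_le (fun j => coord_le_mxnorm w j).
Qed.

Lemma nu_conv_closure (S : set 'cV[R]_d) (t : \bar R) : (0 <= t)%E ->
  (forall b, S b -> ((nu b)%:E <= t)%E) ->
  forall b, closure (convhull S) b -> ((eucl (W x *m b))%:E <= t)%E.
Proof.
case: t => [r| |] t0 hS b hb; last 2 first.
- exact: leey.
- by move: t0.
have hconv b' : convhull S b' -> nu b' <= r.
  move=> [m [c [v [c0 [c1 [hv ->]]]]]].
  apply: (le_trans (nu_sum v c0)).
  apply: (@le_trans _ _ (\sum_j c j * r)).
    by apply: ler_sum => j _; rewrite ler_wpM2l // -lee_fin hS.
  by rewrite -mulr_suml c1 mul1r.
rewrite lee_fin (le_trans (eucl_le_sum _)) //.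
apply/ler_addgt0Pr => e e0.
have K1 : 0 < Kx + 1 by rewrite ltr_wpDl // Kx_ge0.
pose e' := e / (Kx + 1).
have e'0 : 0 < e' by rewrite divr_gt0.
have [b' [hb' bb']] := hb _ (nbhsx_ballx b e' e'0).
move: bb'; rewrite -ball_normE /ball_ /= => bb'.
have -> : b = b' + (b - b') by rewrite addrC subrK.
apply: (le_trans (nu_add _ _)); apply: lerD; first exact: hconv.
apply: (le_trans (nu_bound _)).
apply: (@le_trans _ _ ((Kx + 1) * e')).
  by apply: ler_pM => //; [exact: Kx_ge0 | rewrite lerDl | exact: ltW].
by rewrite /e' mulrC divfK // gt_eqF.
Qed.

Lemma I1_S b : [set (\1_A x) *: avg mu A g | A in B & g in S0 WF] b ->
  ((nu b)%:E <= (d%:R)%:E * tau)%E.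
Proof.
move=> [A BA [g hg <-]].
have d0 : (0 <= (d%:R : R)%:E)%E by rewrite lee_fin.
rewrite indicE; case: (boolP (x \in A)) => xA /=; last first.
  rewrite scale0r /nu big1 ?mule_ge0 ?tau_ge0 // => i _.
  by rewrite mulmx0 mxE normr0.
rewrite scale1r.
pose f := fun y => \1_(~` N) y *: (W y *m g y).
have hf : S0 F f.
  split.
    move=> i; rewrite /f.
    rewrite (_ : (fun y => _) = (fun y => \1_(~` N) y * (W y *m g y) i 0)); last first.
      by apply/funext => y; rewrite mxE.
    apply: measurable_funM; first by apply: measurable_indic; exact: measurableC.
    exact: (mmeas_mul hWm (vmeas_mmeas hg.1)).
  move=> y; rewrite /f indicE; case: (boolP (y \in ~` N)) => hy /=.
    rewrite scale1r; have [b0 Fb <-] := hg.2 y.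
    have hu : W y \in unitmx by apply: posdef_unit; apply: hWpd; move: hy; rewrite inE.
    by rewrite mulmxA mulmxV // mul1mx.
  by rewrite scale0r; exact: hF0.
have mWg i : measurable_fun setT (fun y => (W x *m g y) i 0).
  exact: (mmeas_mul (mmeas_cst _) (vmeas_mmeas hg.1)).
have hWg i : mu.-integrable A (EFin \o (fun y => (W x *m g y) i 0)).
  apply: (integ BA (mWg i) Kx_ge0) => y.
  by rewrite (le_trans (coordWx _ _)) // ler_wpM2l ?Kx_ge0 // sel_bound.
have hWga i : mu.-integrable A (EFin \o (fun y => `|(W x *m g y) i 0|)).
  apply: (integ BA _ Kx_ge0) => [|y]; first by apply: measurableT_comp => //; exact: mWg.
  by rewrite normr_id (le_trans (coordWx _ _)) // ler_wpM2l ?Kx_ge0 // sel_bound.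
have meWg : measurable_fun setT (fun y => eucl (W x *m g y)).
  exact: measurable_eucl (mmeas_mul (mmeas_cst _) (vmeas_mmeas hg.1)).
have hWge : mu.-integrable A (EFin \o (fun y => eucl (W x *m g y))).
  apply: (integ BA meWg Kx_ge0) => y.
  by rewrite ger0_norm ?eucl_ge0 // (le_trans (euclWx _)) // ler_wpM2l ?Kx_ge0 // sel_bound.
have key : nu (avg mu A g) <= d%:R * (cA A * Rintegral mu A (fun y => eucl (W x *m g y))).
  rewrite /nu (eq_bigr (fun i => cA A * `|Rintegral mu A (fun y => (W x *m g y) i 0)|)); last first.
    by move=> i _; rewrite avg_coord // normrM ger0_norm // cA_ge0.
  have -> : d%:R * (cA A * Rintegral mu A (fun y => eucl (W x *m g y))) =
            \sum_(i < d) (cA A * Rintegral mu A (fun y => eucl (W x *m g y))).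
    by rewrite sumr_const card_ord mulr_natl.
  apply: ler_sum => i _; rewrite ler_wpM2l ?cA_ge0 //.
  apply: (le_trans (le_normr_Rintegral (hBm BA) (hWg i))).
  apply: le_Rintegral => //; first exact: hBm.
  by move=> y _; exact: eucl_coord.
have ae : (\int[mu]_(y in A) (eucl (W x *m g y))%:E = \int[mu]_(y in A) (eucl (L y *m f y))%:E)%E.
  apply: ae_eq_integral; first exact: hBm.
  - by apply/measurable_EFinP; exact: measurable_funTS.
  - apply/measurable_EFinP; apply: measurable_funTS.
    exact: measurable_eucl (meas_L (vmeas_mmeas hf.1)).
  exists N; split => // y /= hy; apply: contrapT => Ny; apply: hy => _.
  have hu : W y \in unitmx by exact: posdef_unit (hWpd Ny).
  rewrite /f indicE mem_set //= scale1r.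
  by rewrite -!mulmxA (mulmxA (invmx (W y))) mulVmx // mul1mx.
apply: (@le_trans _ _ ((d%:R)%:E * ((cA A)%:E * \int[mu]_(y in A) (eucl (L y *m f y))%:E))%E).
  by rewrite -ae -Rint_EFin // -!EFinM lee_fin.
rewrite lee_wpmul2l //.
apply: (@le_trans _ _ (MW mu B W f x)); last by apply: ereal_sup_ubound; exists f.
by apply: ereal_sup_ubound; exists A => //; split => //; move: xA; rewrite inE.
Qed.

Lemma I1 : (sig <= (d%:R)%:E * tau)%E.
Proof.
apply: ge_ereal_sup => _ [b hb <-].
apply: (nu_conv_closure _ _ hb).
  by apply: mule_ge0; [rewrite lee_fin | exact: tau_ge0].
exact: I1_S.
Qed.

Lemma le_int_nm A (f g : T -> \bar R) : (forall y, A y -> (0 <= f y)%E) ->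
  (forall y, A y -> (f y <= g y)%E) ->
  (\int[mu]_(y in A) f y <= \int[mu]_(y in A) g y)%E.
Proof.
move=> f0 fg.
rewrite (ge0_integralE _ f0) (ge0_integralE _ (fun y Ay => le_trans (f0 y Ay) (fg y Ay))).
apply: ereal_sup_le => _ [h hh <-]; exists h => // y.
apply: (le_trans (hh y)); rewrite /patch; case: ifP => // /set_mem Ay.
exact: fg.
Qed.

Lemma intWg A g i : B A -> S0 WF g ->
  mu.-integrable A (EFin \o (fun y => (W x *m g y) i 0)).
Proof.
move=> BA hg; apply: (integ BA _ Kx_ge0) => [|y].
  exact: (mmeas_mul (mmeas_cst _) (vmeas_mmeas hg.1)).
by rewrite (le_trans (coordWx _ _)) // ler_wpM2l ?Kx_ge0 // sel_bound.
Qed.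

Lemma UL (h : T -> 'cV[R]_d) (s : 'I_d -> nat -> T -> 'cV[R]_d) :
  (forall i m, S0 F (s i m)) ->
  (forall i m y, 0 <= (L y *m s i m y) i 0) ->
  (forall i y, {homo (fun m => (L y *m s i m y) i 0) : a b / (a <= b)%N >-> a <= b}) ->
  (forall i y, (fun m => ((L y *m s i m y) i 0)%:E) @ \oo --> (`|(L y *m h y) i 0|)%:E) ->
  (MW mu B W h x <= (d%:R)%:E * sig)%E.
Proof.
move=> hs hs0 hnd hcv.
apply: ge_ereal_sup => _ [A [BA Ax] <-].
have mA := hBm BA.
have c0 : (0 <= (cA A)%:E)%E by rewrite lee_fin cA_ge0.
pose G i m y := ((L y *m s i m y) i 0)%:E.
have mG i m : measurable_fun A (G i m).
  apply/measurable_EFinP; apply: measurable_funTS.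
  exact: (meas_L (vmeas_mmeas (hs i m).1)).
have G0 i m y : (0 <= G i m y)%E by rewrite lee_fin.
have Gnd i y : {homo (G i)^~ y : a b / (a <= b)%N >-> (a <= b)%E}.
  by move=> a b ab; rewrite lee_fin; exact: hnd.
have mabs i : measurable_fun A (fun y => (`|(L y *m h y) i 0|)%:E).
  exact: (emeasurable_fun_cvg (G i) _ (mG i) (fun y _ => hcv i y)).
have bnd i m : ((cA A)%:E * \int[mu]_(y in A) G i m y <= sig)%E.
  pose g := fun y => invmx (W y) *m s i m y.
  have hg : S0 WF g.
    split; first by apply: mmeas_vmeas; apply: mmeas_mul; [exact: mmeas_inv | exact: (vmeas_mmeas (hs i m).1)].
    by move=> y; exists (s i m y) => //; exact: (hs i m).2.
  have -> : (\int[mu]_(y in A) G i m y = \int[mu]_(y in A) ((W x *m g y) i 0)%:E)%E.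
    by apply: eq_integral => y _; rewrite /G /g mulmxA.
  rewrite -Rint_EFin //; last exact: intWg.
  rewrite -EFinM -avg_coord //.
  apply: (le_trans _ (ereal_sup_ubound _)); last first.
    by exists ((\1_A x) *: avg mu A g); first exact: S_in_MK.
  rewrite indicE mem_set // scale1r lee_fin.
  exact: le_trans (ler_norm _) (eucl_coord _ _).
have step3 i : ((cA A)%:E * \int[mu]_(y in A) (`|(L y *m h y) i 0|)%:E <= sig)%E.
  have -> : (\int[mu]_(y in A) (`|(L y *m h y) i 0|)%:E = \int[mu]_(y in A) limn ((G i)^~ y))%E.
    by apply: eq_integral => y _; rewrite (cvg_lim _ (hcv i y)).
  rewrite (monotone_convergence mu mA (mG i) (fun m y _ => G0 i m y) (fun y _ => Gnd i y)).
  have ndI : {homo (fun m => (\int[mu]_(y in A) G i m y)%E) : a b / (a <= b)%N >-> (a <= b)%E}.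
    move=> a b ab; apply: ge0_le_integral => // y _; exact: Gnd.
  rewrite -limeMl //; last exact: ereal_nondecreasing_is_cvgn.
  apply: lime_le; last exact: nearW.
  apply: ereal_nondecreasing_is_cvgn => a b ab.
  by apply: lee_wpmul2l => //; exact: ndI.
apply: (@le_trans _ _ ((cA A)%:E * \sum_(i < d) \int[mu]_(y in A) (`|(L y *m h y) i 0|)%:E)%E).
  apply: lee_wpmul2l => //.
  rewrite -(ge0_integral_sum mu mA mabs); last by move=> i y _; rewrite lee_fin.
  apply: le_int_nm => y _; first by rewrite lee_fin eucl_ge0.
  by rewrite sumEFin lee_fin; exact: eucl_le_sum.
rewrite ge0_sume_distrr; last by move=> i _; apply: integral_ge0 => y _; rewrite lee_fin.
apply: (@le_trans _ _ (\sum_(i < d) sig)%E); first by apply: lee_sum => i _; exact: step3.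
by rewrite sumr_const card_ord mule_natl.
Qed.

Lemma I2 : (tau <= (d%:R)%:E * sig)%E.
Proof.
apply: ge_ereal_sup => _ [f hf <-].
pose sg y i : R := if 0 <= (L y *m f y) i 0 then 1 else -1.
have sgv y i : sg y i * (L y *m f y) i 0 = `|(L y *m f y) i 0|.
  rewrite /sg; case: ifP => h; first by rewrite mul1r ger0_norm.
  by rewrite mulN1r ltr0_norm // ltNge h.
apply: (UL (s := fun i m y => sg y i *: f y)).
- move=> i m; split.
    apply: mmeas_vmeas => a b.
    rewrite (_ : (fun y => _) = (fun y => sg y i * f y a b)); last first.
      by apply/funext => y; rewrite mxE.
    apply: measurable_funM; last exact: (vmeas_mmeas hf.1).
    rewrite /sg; apply: measurable_fun_ifT; try exact: measurable_cst.
    apply: measurable_fun_ler; first exact: measurable_cst.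
    exact: (meas_L (vmeas_mmeas hf.1)).
  move=> y; rewrite /sg; case: ifP => _; first by rewrite scale1r; exact: hf.2.
  by rewrite scaleN1r; apply: hFsym; exact: hf.2.
- by move=> i m y; rewrite -scalemxAr mxE sgv.
- by move=> i y a b _.
- move=> i y; rewrite (_ : (fun m => _) = (fun _ => (`|(L y *m f y) i 0|)%:E)).
    exact: cvg_cst.
  by apply/funext => m; rewrite -scalemxAr mxE sgv.
Qed.

Lemma tau_le_MW f : (forall y, F y = convhull [set - f y; f y]) ->
  (tau <= MW mu B W f x)%E.
Proof.
move=> hFf; apply: ge_ereal_sup => _ [g hg <-].
apply: ge_ereal_sup => _ [A [BA Ax] <-].
apply: (@le_trans _ _ ((cA A)%:E * \int[mu]_(y in A) (eucl (L y *m f y))%:E)%E); last first.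
  by apply: ereal_sup_ubound; exists A.
apply: lee_wpmul2l; first by rewrite lee_fin cA_ge0.
apply: le_int_nm => y _; first by rewrite lee_fin eucl_ge0.
have := hg.2 y; rewrite hFf => /convhull2 [t [t1 ->]].
by rewrite -scalemxAr eucl_scale lee_fin ler_piMl // eucl_ge0.
Qed.

Fixpoint sel (fk : nat -> T -> 'cV[R]_d) (i : 'I_d) (m : nat) : T -> 'cV[R]_d :=
  match m with
  | 0 => fun _ => 0
  | m'.+1 => fun y => if (L y *m sel fk i m' y) i 0 < (L y *m fk m' y) i 0
                      then fk m' y else sel fk i m' y
  end.

Lemma I4 f (fk : nat -> T -> 'cV[R]_d) : (forall m, vmeas (fk m)) ->
  (forall y, F y = closure (range (fun m => fk m y))) ->
  (forall y, F y = convhull [set - f y; f y]) ->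
  (MW mu B W f x <= (d%:R)%:E * sig)%E.
Proof.
move=> hfk hFk hFf.
have selS i m : S0 F (sel fk i m).
  elim: m => [|m IH]; first exact: S0_F0.
  split.
    apply: mmeas_vmeas => a b /=.
    rewrite (_ : (fun y => _) = (fun y => if (L y *m sel fk i m y) i 0 < (L y *m fk m y) i 0
                      then fk m y a b else sel fk i m y a b)); last first.
      by apply/funext => y; case: ifP.
    apply: measurable_fun_ifT.
    - apply: measurable_fun_ltr.
        exact: (meas_L (vmeas_mmeas IH.1)).
      exact: (meas_L (vmeas_mmeas (hfk m))).
    - exact: (vmeas_mmeas (hfk m)).
    - exact: (vmeas_mmeas IH.1).
  move=> y /=; case: ifP => _; last exact: IH.2.
  by rewrite hFk; apply: subset_closure; exists m.
have sel0 i m y : 0 <= (L y *m sel fk i m y) i 0.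
  elim: m => [|m IH] /=; first by rewrite mulmx0 mxE.
  case: ifP => h //; exact: ltW (le_lt_trans IH h).
have step1 i m y : (L y *m sel fk i m y) i 0 <= (L y *m sel fk i m.+1 y) i 0.
  by rewrite /=; case: ifP => h //; exact: ltW.
have step2 i m y : (L y *m fk m y) i 0 <= (L y *m sel fk i m.+1 y) i 0.
  by rewrite /=; case: ifP => h //; rewrite leNgt h.
have selabs i m y : (L y *m sel fk i m y) i 0 <= `|(L y *m f y) i 0|.
  have := (selS i m).2 y; rewrite hFf => /convhull2 [t [t1 ->]].
  rewrite -scalemxAr mxE (le_trans (ler_norm _)) // normrM ler_piMl //.
have approx y v i e : F y v -> 0 < e -> exists m, (L y *m v) i 0 - e <= (L y *m fk m y) i 0.
  move=> Fv e0.
  pose K := \sum_j `|(L y) i j|.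
  have K0 : 0 <= K by apply: sumr_ge0.
  have K1 : 0 < K + 1 by rewrite ltr_wpDl.
  pose e' := e / (K + 1).
  have e'0 : 0 < e' by rewrite divr_gt0.
  move: Fv; rewrite hFk => Fv.
  have [_ [[m _ <-] bw]] := Fv _ (nbhsx_ballx v e' e'0).
  exists m.
  move: bw; rewrite -ball_normE /ball_ /= => bw.
  have : (L y *m v) i 0 - (L y *m fk m y) i 0 <= e.
    have -> : (L y *m v) i 0 - (L y *m fk m y) i 0 = (L y *m (v - fk m y)) i 0.
      by rewrite mulmxDr mulmxN !mxE.
    apply: (le_trans (ler_norm _)); apply: (le_trans (mulmx_coord_le _ _ (fun j => coord_le_mxnorm _ j))).
    apply: (@le_trans _ _ ((K + 1) * e')).
      by apply: ler_pM => //; [rewrite lerDl | exact: ltW].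
    by rewrite /e' mulrC divfK // gt_eqF.
  lra.
apply: (UL (s := sel fk)) => //.
- by move=> i y; apply/nondecreasing_seqP => m; exact: step1.
move=> i y.
have nd : {homo (fun m => ((L y *m sel fk i m y) i 0)%:E) : a b / (a <= b)%N >-> (a <= b)%E}.
  move=> a b ab; rewrite lee_fin.
  by move: a b ab; apply/nondecreasing_seqP => m; exact: step1.
have -> : ((`|(L y *m f y) i 0|)%:E = ereal_sup (range (fun m => ((L y *m sel fk i m y) i 0)%:E)))%E.
  apply/eqP; rewrite eq_le; apply/andP; split; last first.
    by apply: ge_ereal_sup => _ [m _ <-]; rewrite lee_fin.
  apply/lee_addgt0Pr => e e0.
  have Ff : F y (f y).
    rewrite hFf; exists 1%N, (fun _ => 1), (fun _ => f y).
    split; first by move=> j; exact: ler01.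
    split; first by rewrite big_ord1.
    split; first by move=> j; right.
    by rewrite big_ord1 scale1r.
  have [m hm] : exists m, `|(L y *m f y) i 0| - e <= (L y *m fk m y) i 0.
    case: (lerP 0 ((L y *m f y) i 0)) => h.
      by rewrite ger0_norm //; exact: approx.
    rewrite ltr0_norm //.
    have [m hm] := approx y (- f y) i e (hFsym Ff) e0.
    by exists m; move: hm; rewrite mulmxN mxE.
  apply: (@le_trans _ _ (((L y *m sel fk i m.+1 y) i 0)%:E + e%:E)%E).
    rewrite -EFinD lee_fin; move: hm (step2 i m y); lra.
  by rewrite leeD2r //; apply: ereal_sup_ubound; exists m.+1.
exact: ereal_nondecreasing_cvgn.
Qed.

Variable fk : nat -> T -> 'cV[R]_d.
Hypothesis hfk : forall m, vmeas (fk m).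
Hypothesis hFk : forall y, F y = closure (range (fun m => fk m y)).

Lemma main_bounds :
  (sig <= (d%:R + 1)%:E * tau)%E /\ (tau <= (d%:R + 1)%:E * sig)%E /\
  (forall f, (forall y, F y = convhull [set - f y; f y]) ->
     (sig <= (d%:R + 1)%:E * MW mu B W f x)%E /\ (MW mu B W f x <= (d%:R + 1)%:E * sig)%E).
Proof.
have dC (a : \bar R) : (0 <= a)%E -> ((d%:R)%:E * a <= (d%:R + 1)%:E * a)%E.
  by move=> a0; rewrite !(muleC _ a) lee_wpmul2l // lee_fin lerDl.
have d0 : (0 <= (d%:R : R)%:E)%E by rewrite lee_fin.
split; first exact: le_trans I1 (dC _ tau_ge0).
split; first exact: le_trans I2 (dC _ sig_ge0).
move=> f hFf; split.
  apply: (le_trans I1); apply: (le_trans _ (dC _ (MW_ge0 f))).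
  by rewrite lee_wpmul2l // tau_le_MW.
exact: le_trans (I4 hfk hFk hFf) (dC _ sig_ge0).
Qed.

End Main.

Lemma F_props (R : realType) n d (F : LebT R n -> set 'cV[R]_d) (fk : nat -> LebT R n -> 'cV[R]_d) :
  (forall y, F y = closure (range (fun m => fk m y))) -> (forall y, Kbcs (F y)) ->
  (forall y, F y 0) /\ (forall y v, F y v -> F y (- v)).
Proof.
move=> hFk hK; split; last by move=> y v Fv; have [_ [_ hs]] := hK y; exact: hs.
move=> y; have Fa : F y (fk 0%N y) by rewrite hFk; apply: subset_closure; exists 0%N.
have [_ [hc hs]] := hK y.
have t01 : (0 <= (2^-1 : R)) && ((2^-1 : R) <= 1).
  by rewrite invr_ge0 ler0n /= invf_le1 ?ler1n ?ltr0n.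
have := hc _ _ _ Fa (hs _ Fa) t01.
have -> : (1 - 2^-1 : R) = 2^-1.
  by rewrite [X in X - _](splitr 1) mul1r addrK.
by rewrite scalerN addrN.
Qed.

Lemma rect_int (R : realType) n1 n2 (mu : {measure set (LebT R (n1 + n2)) -> \bar R})
  (kk : LebT R (n1 + n2) -> R) :
  (forall (a : 'rV[R]_(n1 + n2)) (l : R), 0 < l ->
    mu.-integrable (fun x => cube a l (pt x)) (fun x => (kk x)%:E)) ->
  forall A, rects A -> mu.-integrable A (EFin \o kk).
Proof.
move=> kkint A hA; have mA := rects_meas hA.
move: hA => [a1 [l1 [a2 [l2 [l10 [l20 hA]]]]]].
have l0 : 0 < l1 + l2 by rewrite addr_gt0.
apply: (integrableS (E := fun x => cube (row_mx a1 a2) (l1 + l2) (pt x))) => //.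
- by apply: cubes_meas; exists (row_mx a1 a2), (l1 + l2).
- rewrite hA => y [h1 h2] i.
  case: (splitP i) => j hj.
    have -> : i = lshift n2 j by apply: val_inj.
    rewrite row_mxEl; have := h1 j; rewrite mxE => /andP [u v].
    apply/andP; split => //; lra.
  have -> : i = rshift n1 j by apply: val_inj.
  rewrite row_mxEr; have := h2 j; rewrite mxE => /andP [u v].
  apply/andP; split => //; lra.
- exact: kkint.
Qed.

Unset Implicit Arguments.

Theorem lemma3p4 (R : realType) (d : nat) :
  exists C : R, 0 < C /\
  (* bi-parameter (strong) operators M_K^s and M_W^s on R^n = R^n1 x R^n2 *)
  (forall (n1 n2 : nat) (mu : {measure set (LebT R (n1 + n2)) -> \bar R})
     (W : LebT R (n1 + n2) -> 'M[R]_d) (F : LebT R (n1 + n2) -> set 'cV[R]_d),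
     (0 < n1)%N -> (0 < n2)%N ->
     is_lebesgue mu -> matrix_weight mu W ->
     setfun_meas F -> (forall x, Kbcs (F x)) ->
     loc_int_bounded mu (winv_set W F) ->
     forall x : LebT R (n1 + n2),
       (set_norm (W x) (MK mu (@rects R n1 n2) (winv_set W F) x)
          <= C%:E * supMW mu (@rects R n1 n2) W F x)%E /\
       (supMW mu (@rects R n1 n2) W F x
          <= C%:E * set_norm (W x) (MK mu (@rects R n1 n2) (winv_set W F) x))%E /\
       (forall f : LebT R (n1 + n2) -> 'cV[R]_d,
          (forall y, F y = convhull [set - f y; f y]) ->
          (set_norm (W x) (MK mu (@rects R n1 n2) (winv_set W F) x)
             <= C%:E * MW mu (@rects R n1 n2) W f x)%E /\
          (MW mu (@rects R n1 n2) W f x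
             <= C%:E * set_norm (W x) (MK mu (@rects R n1 n2) (winv_set W F) x))%E)) /\
  (* one-parameter operators M_K and M_W on R^n *)
  (forall (n : nat) (mu : {measure set (LebT R n) -> \bar R})
     (W : LebT R n -> 'M[R]_d) (F : LebT R n -> set 'cV[R]_d),
     (0 < n)%N ->
     is_lebesgue mu -> matrix_weight mu W ->
     setfun_meas F -> (forall x, Kbcs (F x)) ->
     loc_int_bounded mu (winv_set W F) ->
     forall x : LebT R n,
       (set_norm (W x) (MK mu (@cubes R n) (winv_set W F) x)
          <= C%:E * supMW mu (@cubes R n) W F x)%E /\
       (supMW mu (@cubes R n) W F x
          <= C%:E * set_norm (W x) (MK mu (@cubes R n) (winv_set W F) x))%E /\
       (forall f : LebT R n -> 'cV[R]_d,
          (forall y, F y = convhull [set - f y; f y]) ->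
          (set_norm (W x) (MK mu (@cubes R n) (winv_set W F) x)
             <= C%:E * MW mu (@cubes R n) W f x)%E /\
          (MW mu (@cubes R n) W f x
             <= C%:E * set_norm (W x) (MK mu (@cubes R n) (winv_set W F) x))%E)).
Proof.
exists (d%:R + 1); split.
  have : (0 : R) <= d%:R by rewrite ler0n.
  lra.
split.
  move=> n1 n2 mu W F _ _ _ [hWm [N [mN [muN hpd]]]] [fk [hfk hFk]] hK [kk [[kkm kkint] hk]] x.
  have [hF0 hFs] := F_props hFk hK.
  apply: (main_bounds (B := @rects R n1 n2) hWm mN muN hpd hF0 hFs hk _ _ _ hfk hFk).
  - exact: rects_meas.
  - exact: rect_int.
  - exists (fun x' : LebT R (n1 + n2) => cube (lsubmx (pt x)) 1 (lsubmx (pt x')) /\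
                                        cube (rsubmx (pt x)) 1 (rsubmx (pt x'))).
    split; first by exists (lsubmx (pt x)), 1, (rsubmx (pt x)), 1.
    by split => i; rewrite lexx lerDl ler01.
move=> n mu W F _ _ [hWm [N [mN [muN hpd]]]] [fk [hfk hFk]] hK [kk [[kkm kkint] hk]] x.
have [hF0 hFs] := F_props hFk hK.
apply: (main_bounds (B := @cubes R n) hWm mN muN hpd hF0 hFs hk _ _ _ hfk hFk).
- exact: cubes_meas.
- by move=> A [a [l [l0 ->]]]; exact: kkint.
- exists (fun x' : LebT R n => cube (pt x) 1 (pt x')).
  split; first by exists (pt x), 1.
  by move=> i; rewrite lexx lerDl ler01.
Qed.
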